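(* Let $N\ge 1$ and let $R(k_1,k_2)\in\mathrm{End}(\mathbb{C}^N\otimes\mathbb{C}^N)$ be a matrix-valued function of two real spectral parameters satisfying the Yang–Baxter equation $R_{12}(k_1,k_2)R_{13}(k_1,k_3)R_{23}(k_2,k_3)=R_{23}(k_2,k_3)R_{13}(k_1,k_3)R_{12}(k_1,k_2)$ and the unitarity condition $R_{12}(k_1,k_2)R_{21}(k_2,k_1)=\mathbb{I}\otimes\mathbb{I}$. Let $\mathcal{A}_R$ be the associated Zamolodchikov–Faddeev algebra and $T(k)$ its well-bred vertex operator (see context). Let $B(k)$ be a numerical $N\times N$ matrix-valued function such that $$R_{12}\,B_1\,R'_{21}\,B_2=B_2\,R'_{12}\,B_1\,\bar R_{21},\qquad B(k)B(-k)=\mathbb{I}_N .$$ Define $$\tilde a(k)=\tfrac12\big(a(k)+b(k)a(-k)\big),\quad \tilde a^\dagger(k)=\tfrac12\big(a^\dagger(k)+a^\dagger(-k)b(-k)\big),\quad b(k)=T(k)B(k)T(-k)^{-1}.$$ Then these elements satisfy the relations of the boundary algebra $\mathcal{B}_R$: $$\tilde a_1\tilde a_2=R_{21}\tilde a_2\tilde a_1,\qquad \tilde a^\dagger_1\tilde a^\dagger_2=\tilde a^\dagger_2\tilde a^\dagger_1R_{21},$$ $$\tilde a_1\tilde a^\dagger_2=\tilde a^\dagger_2R_{12}\tilde a_1+\tfrac12\delta_{12}+\tfrac12 b_{12},$$ $$\tilde a_1 b_2=R_{21}\,b_2\,R'_{12}\,\tilde a_1,\qquad b_1\tilde a^\dagger_2=\tilde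 a^\dagger_2\,R_{12}\,b_1\,R'_{21},$$ $$R_{12}\,b_1\,R'_{21}\,b_2=b_2\,R'_{12}\,b_1\,\bar R_{21},\qquad b(k)b(-k)=\mathbb{I}.$$
   Context: Notation: $e_i$ ($i=1,\dots,N$) is the standard column basis of $\mathbb{C}^N$, $e_i^\dagger$ the corresponding row vector, $E_{ij}$ the matrix units. Subscripts $1,2,3$ indicate the tensor factor of $\mathbb{C}^N$ on which a matrix acts and the spectral parameter $k_1,k_2,k_3$ attached: $R_{12}=R_{12}(k_1,k_2)$, $R_{21}=R_{21}(k_2,k_1)$ (i.e. $R$ acting in spaces $2,1$), $R'_{12}=R_{12}(k_1,-k_2)$, $R'_{21}=R_{21}(k_2,-k_1)$, $\bar R_{12}=R_{12}(-k_1,-k_2)$, $\bar R_{21}=R_{21}(-k_2,-k_1)$. For a matrix $M(k)$, $M_1=M(k_1)\otimes\mathbb{I}_N$, $M_2=\mathbb{I}_N\otimes M(k_2)$. ZF algebra $\mathcal{A}_R$: generators $a_i(k),a_i^\dagger(k)$, $i=1,\dots,N$, $k\in\mathbb{R}$; writing $a(k)=\sum_i a_i(k)e_i$ (column), $a^\dagger(k)=\sum_i a_i^\dagger(k)e_i^\dagger$ (row), $a_1=\sum_i a_i(k_1)e_i\otimes\mathbb{I}$, $a_2=\sum_i a_i(k_2)\mathbb{I}\otimes e_i$, similarly $a_1^\dagger,a_2^\dagger$, and $\delta_{12}=\delta(k_1-k_2)\sum_i e_i\otimes e_i^\dagger$, the relations are $a_1a_2=R_{21}a_2a_1$, $a_1^\dagger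 a_2^\dagger=a_2^\dagger a_1^\dagger R_{21}$, $a_1a_2^\dagger=a_2^\dagger R_{12}a_1+\delta_{12}$. Well-bred vertex operator: $T(k)=\sum_{i,j}T^{ij}(k)E_{ij}$, an invertible $N\times N$ matrix with entries in (a completion of) $\mathcal{A}_R$ (given by a normally ordered series in $a^\dagger,a$ with leading term $\mathbb{I}$), satisfying $T_1a_2=R_{21}a_2T_1$, $T_1a_2^\dagger=a_2^\dagger R_{12}T_1$, $R_{12}T_1T_2=T_2T_1R_{12}$. Also $b_1(k)=\sum_{ij}b_{ij}(k)E_{ij}\otimes\mathbb{I}$, $b_2(k)=\sum_{ij}b_{ij}(k)\mathbb{I}\otimes E_{ij}$, $\tilde a_1,\tilde a_2,\tilde a^\dagger_1,\tilde a^\dagger_2$ as for $a$, and $b_{12}=\delta(k_1+k_2)\sum_{i,j}b_{ij}(k_1)\,e_i\otimes e_j^\dagger$. *)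

(* Defs.v *)
From HB Require Import structures.
From mathcomp Require Import all_boot all_order all_algebra.
From mathcomp Require Import complex reals.
Set Implicit Arguments. Unset Strict Implicit. Unset Printing Implicit Defensive.
Import Order.TTheory GRing.Theory Num.Theory.
Local Open Scope ring_scope.

(* An operator M on C^N (x) C^N with entries in a ring S is stored as its    *)
(* components  M a b c d = <e_a (x) e_b | M | e_c (x) e_d>  (output indices   *)
(* a (space 1), b (space 2); input indices c (space 1), d (space 2)).         *)

Definition op2 (S : Type) (N : nat) := 'I_N -> 'I_N -> 'I_N -> 'I_N -> S.

Section Ops.
Variables (S : pzRingType) (N : nat).

Definition mul2 (M M' : op2 S N) : op2 S N :=
  fun a b c d => \sum_(x < N) \sum_(y < N) M a b x y * M' x y c d.

Definition id2 : op2 S N :=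
  fun a b c d => ((a == c) && (b == d))%:R.

(* M_{21} := P M P (the operator M acting in the spaces 2,1) *)
Definition swap2 (M : op2 S N) : op2 S N := fun a b c d => M b a d c.

Definition emb1 (M : 'I_N -> 'I_N -> S) : op2 S N :=
  fun a b c d => M a c * (b == d)%:R.
Definition emb2 (M : 'I_N -> 'I_N -> S) : op2 S N :=
  fun a b c d => (a == c)%:R * M b d.

End Ops.

Definition lift2 (C : pzRingType) (A : lalgType C) (N : nat) (M : op2 C N)
  : op2 A N := fun a b c d => (M a b c d)%:A.

(* The reflection-type equation
     R_12 M_1 R'_21 M_2 = M_2 R'_12 M_1 Rbar_21
   with R_12 = R(k1,k2), R'_21 = R_21(k2,-k1), R'_12 = R(k1,-k2),
   Rbar_21 = R_21(-k2,-k1), M_1 = M(k1) (x) I, M_2 = I (x) M(k2). *)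
Definition reflection_eq (K : numDomainType) (S : pzRingType) (N : nat)
  (R : K -> K -> op2 S N) (M : K -> 'I_N -> 'I_N -> S) (k1 k2 : K) : Prop :=
  mul2 (mul2 (mul2 (R k1 k2) (emb1 (M k1))) (swap2 (R k2 (- k1)))) (emb2 (M k2))
  = mul2 (mul2 (mul2 (emb2 (M k2)) (R k1 (- k2))) (emb1 (M k1)))
         (swap2 (R (- k2) (- k1))).

Definition yang_baxter (K : Type) (S : pzRingType) (N : nat)
  (R : K -> K -> op2 S N) : Prop :=
  forall (k1 k2 k3 : K) (a b c d e f : 'I_N),
    \sum_(x < N) \sum_(y < N) \sum_(z < N)
       R k1 k2 a b x y * R k1 k3 x c d z * R k2 k3 y z e f
  = \sum_(x < N) \sum_(y < N) \sum_(z < N)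
       R k2 k3 b c y z * R k1 k3 a z x f * R k1 k2 x y d e.

Definition unitarity (K : Type) (S : pzRingType) (N : nat)
  (R : K -> K -> op2 S N) : Prop :=
  forall k1 k2 : K, mul2 (R k1 k2) (swap2 (R k2 k1)) = @id2 S N.

(* Main.v *)
Require Import Defs.
From HB Require Import structures.
From mathcomp Require Import all_boot all_order all_algebra.
From mathcomp Require Import complex reals.
From Stdlib Require Import FunctionalExtensionality.
Import Order.TTheory GRing.Theory Num.Theory.
Local Open Scope ring_scope.

Lemma funext4 (I : Type) (S : Type) (f g : I -> I -> I -> I -> S) :
  (forall a b c d, f a b c d = g a b c d) -> f = g.
Proof.
move=> h; apply: functional_extensionality => a.
apply: functional_extensionality => b.
apply: functional_extensionality => c.
apply: functional_extensionality => d. exact: h.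
Qed.

Lemma perm8 (V : zmodType) (m1 m2 m3 m4 e1 e2 e3 e4 : V) :
  ((m1 + e1) + (m3 + e2)) + ((m2 + e3) + (m4 + e4)) = ((m1 + m2) + (m3 + m4)) + ((e1 + e2) + (e3 + e4)).
Proof.
rewrite [m1 + e1 + _]addrACA [m2 + e3 + _]addrACA.
by rewrite (addrACA (m1 + m3)) (addrACA m1 m3).
Qed.

Section Gen.
Variables (S : pzRingType) (N : nat).
Local Notation op := (op2 S N).

Lemma sum_only (F : 'I_N -> S) t :
  (forall x, x != t -> F x = 0) -> \sum_(x < N) F x = F t.
Proof.
move=> h; rewrite (bigD1 t) //= big1 ?addr0 // => x /andP[_ hx]; exact: h.
Qed.

Lemma xch (F : 'I_N -> 'I_N -> S) :
  \sum_(i < N) \sum_(j < N) F i j = \sum_(j < N) \sum_(i < N) F i j.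
Proof. exact: exchange_big. Qed.

Definition add2 (X Y : op) : op := fun a b c d => X a b c d + Y a b c d.

Lemma mul2A (X Y Z : op) : mul2 X (mul2 Y Z) = mul2 (mul2 X Y) Z.
Proof.
apply: funext4 => a b c d; rewrite /mul2.
transitivity (\sum_(x < N) \sum_(y < N) \sum_(u < N) \sum_(v < N)
   X a b x y * Y x y u v * Z u v c d).
  apply: eq_bigr => x _; apply: eq_bigr => y _; rewrite mulr_sumr.
  apply: eq_bigr => u _; rewrite mulr_sumr; apply: eq_bigr => v _.
  by rewrite mulrA.
symmetry.
transitivity (\sum_(u < N) \sum_(v < N) \sum_(x < N) \sum_(y < N)
   X a b x y * Y x y u v * Z u v c d).
  apply: eq_bigr => u _; apply: eq_bigr => v _; rewrite mulr_suml.
  apply: eq_bigr => x _; by rewrite mulr_suml.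
under eq_bigr => u _ do rewrite xch.
rewrite xch; apply: eq_bigr => x _.
under eq_bigr => u _ do rewrite xch.
by rewrite xch.
Qed.

Lemma mul2_1l (X : op) : mul2 (@id2 S N) X = X.
Proof.
apply: funext4 => a b c d; rewrite /mul2 /id2.
rewrite (sum_only _ a) => [|x hx]; last first.
  by rewrite big1 // => y _; rewrite eq_sym (negbTE hx) mul0r.
rewrite (sum_only _ b) => [|y hy]; last by rewrite (eq_sym b) (negbTE hy) andbF mul0r.
by rewrite !eqxx mul1r.
Qed.

Lemma mul2_1r (X : op) : mul2 X (@id2 S N) = X.
Proof.
apply: funext4 => a b c d; rewrite /mul2 /id2.
rewrite (sum_only _ c) => [|x hx]; last first.
  by rewrite big1 // => y _; rewrite (negbTE hx) mulr0.
rewrite (sum_only _ d) => [|y hy]; last by rewrite (negbTE hy) andbF mulr0.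
by rewrite !eqxx mulr1.
Qed.

Lemma mul2Dl (X Y Z : op) : mul2 (add2 X Y) Z = add2 (mul2 X Z) (mul2 Y Z).
Proof.
apply: funext4 => a b c d; rewrite /mul2 /add2 -big_split /=.
apply: eq_bigr => x _; rewrite -big_split; apply: eq_bigr => y _.
by rewrite mulrDl.
Qed.

Lemma mul2Dr (X Y Z : op) : mul2 X (add2 Y Z) = add2 (mul2 X Y) (mul2 X Z).
Proof.
apply: funext4 => a b c d; rewrite /mul2 /add2 -big_split /=.
apply: eq_bigr => x _; rewrite -big_split; apply: eq_bigr => y _.
by rewrite mulrDr.
Qed.

Lemma swap2_mul (X Y : op) : swap2 (mul2 X Y) = mul2 (swap2 X) (swap2 Y).
Proof.
apply: funext4 => a b c d; rewrite /mul2 /swap2 xch //.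
Qed.

Lemma swap2K (X : op) : swap2 (swap2 X) = X.
Proof. by []. Qed.

Lemma swap2_id : swap2 (@id2 S N) = @id2 S N.
Proof. by apply: funext4 => a b c d; rewrite /swap2 /id2 andbC. Qed.

Lemma swap2_add (X Y : op) : swap2 (add2 X Y) = add2 (swap2 X) (swap2 Y).
Proof. by []. Qed.

Lemma swap2_emb1 (M : 'I_N -> 'I_N -> S) : swap2 (emb1 M) = emb2 M.
Proof. by apply: funext4 => a b c d; rewrite /swap2 /emb1 /emb2 commr_nat. Qed.

Lemma swap2_emb2 (M : 'I_N -> 'I_N -> S) : swap2 (emb2 M) = emb1 M.
Proof. by apply: funext4 => a b c d; rewrite /swap2 /emb1 /emb2 commr_nat. Qed.

Lemma neqC {x t : 'I_N} : x != t -> (t == x) = false.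
Proof. by rewrite eq_sym => /negbTE. Qed.

Ltac z0 := rewrite ?(mulr0n, mulr0, mul0r, andbF, andFb, addr0, add0r).
Ltac side := let x := fresh "x" in let hx := fresh "hx" in
  move=> x hx; rewrite ?(negbTE hx) ?(neqC hx) /=; z0;
  try (apply: big1 => ? _; rewrite ?(negbTE hx) ?(neqC hx) /=; z0); try done.

Lemma ev_e1e2 (M M' : 'I_N -> 'I_N -> S) a b c d :
  mul2 (emb1 M) (emb2 M') a b c d = M a c * M' b d.
Proof.
rewrite /mul2 /emb1 /emb2 (sum_only _ c); last by side.
rewrite (sum_only _ b); last by side.
by rewrite !eqxx /= ?mulr1n ?mul1r ?mulr1.
Qed.

Lemma ev_e2e1 (M M' : 'I_N -> 'I_N -> S) a b c d :
  mul2 (emb2 M') (emb1 M) a b c d = M' b d * M a c.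
Proof.
rewrite /mul2 /emb1 /emb2 (sum_only _ a); last by side.
rewrite (sum_only _ d); last by side.
by rewrite !eqxx /= ?mulr1n ?mul1r ?mulr1.
Qed.

Lemma emb12C (M M' : 'I_N -> 'I_N -> S) :
  (forall i j k l, M i j * M' k l = M' k l * M i j) ->
  mul2 (emb1 M) (emb2 M') = mul2 (emb2 M') (emb1 M).
Proof. by move=> h; apply: funext4 => a b c d; rewrite ev_e1e2 ev_e2e1 h. Qed.

Lemma emb1_mul (M M' : 'M[S]_N) :
  emb1 (fun i j => (M *m M') i j) = mul2 (emb1 (fun i j => M i j)) (emb1 (fun i j => M' i j)).
Proof.
apply: funext4 => a b c d; rewrite /mul2 /emb1 mxE mulr_suml; apply: eq_bigr => x _.
rewrite (sum_only _ b) => [|y hy]; last by rewrite eq_sym (negbTE hy) mulr0n mulr0 mul0r.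
by rewrite eqxx mulr1 mulrA.
Qed.

Lemma emb1_one : emb1 (fun i j => (1%:M : 'M[S]_N) i j) = @id2 S N.
Proof.
by apply: funext4 => a b c d; rewrite /emb1 /id2 mxE -natrM mulnb.
Qed.

Lemma emb2_mul (M M' : 'M[S]_N) :
  emb2 (fun i j => (M *m M') i j) = mul2 (emb2 (fun i j => M i j)) (emb2 (fun i j => M' i j)).
Proof. by rewrite -swap2_emb1 emb1_mul swap2_mul !swap2_emb1. Qed.

Lemma emb2_one : emb2 (fun i j => (1%:M : 'M[S]_N) i j) = @id2 S N.
Proof. by rewrite -swap2_emb1 emb1_one swap2_id. Qed.

End Gen.
Arguments sum_only {S N} F t.
Arguments neqC {N x t}.
Arguments add2 {S N}.


Ltac z0 := rewrite ?(mulr0n, mulr0, mul0r, andbF, andFb, addr0, add0r, scaler0).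
Ltac side := let x := fresh "x" in let hx := fresh "hx" in
  move=> x hx; rewrite ?(negbTE hx) ?(neqC hx) /=; z0;
  try (apply: big1 => ? _; rewrite ?(negbTE hx) ?(neqC hx) /=; z0); try done.
Ltac z1 := rewrite ?eqxx /= ?(mulr1n, mul1r, mulr1, andbT, andTb).

Section Alg.
Variables (C : fieldType) (A : algType C) (N : nat) (z : 'I_N).
Local Notation op := (op2 A N).


Definition c1 (v : 'I_N -> A) : op := fun i j c d => v i * ((c == z) && (j == d))%:R.
Definition c2 (v : 'I_N -> A) : op := fun i j c d => v j * ((i == c) && (d == z))%:R.
Definition r1 (w : 'I_N -> A) : op := fun i j c d => w c * ((i == z) && (j == d))%:R.
Definition r2 (w : 'I_N -> A) : op := fun i j c d => w d * ((i == c) && (j == z))%:R.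
Definition Dl (e : A) : op := fun i j c d => e * ((i == d) && (j == z) && (c == z))%:R.
Definition scale2 (s : C) (X : op) : op := fun i j c d => s *: X i j c d.

Lemma swap2_c1 v : swap2 (c1 v) = c2 v.
Proof. by apply: funext4 => a b c d; rewrite /swap2 /c1 /c2 andbC. Qed.
Lemma swap2_c2 v : swap2 (c2 v) = c1 v.
Proof. by apply: funext4 => a b c d; rewrite /swap2 /c1 /c2 andbC. Qed.
Lemma swap2_r1 v : swap2 (r1 v) = r2 v.
Proof. by apply: funext4 => a b c d; rewrite /swap2 /r1 /r2 andbC. Qed.
Lemma swap2_r2 v : swap2 (r2 v) = r1 v.
Proof. by apply: funext4 => a b c d; rewrite /swap2 /r1 /r2 andbC. Qed.
Lemma swap2_scale s X : swap2 (scale2 s X) = scale2 s (swap2 X).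
Proof. by []. Qed.

Lemma bcast (x y : A) (b1 b2 : bool) : x * b1%:R * (y * b2%:R) = x * y * (b1 && b2)%:R.
Proof. by case: b1; case: b2; rewrite /= ?(mulr1n, mulr0n, mulr1, mulr0, mul0r). Qed.

Lemma castr (x y : A) (n : nat) : x * n%:R * y = x * y * n%:R.
Proof. by rewrite -mulrA -(commr_nat y) mulrA. Qed.

Lemma algC (r : C) (x : A) : r%:A * x = x * r%:A.
Proof. by rewrite mulr_algl mulr_algr. Qed.

Lemma lift2_mul (X Y : op2 C N) :
  @lift2 C A N (mul2 X Y) = mul2 (lift2 A X) (lift2 A Y).
Proof.
apply: funext4 => a b c d; rewrite /lift2 /mul2 scaler_suml.
apply: eq_bigr => x _; rewrite scaler_suml; apply: eq_bigr => y _.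
by rewrite mulr_algl scalerA.
Qed.

Lemma lift2_id : @lift2 C A N (@id2 C N) = @id2 A N.
Proof.
apply: funext4 => a b c d; rewrite /lift2 /id2.
by case: (_ && _); rewrite /= ?scale0r ?mulr1n ?scale1r.
Qed.

Lemma natalg (x : C) (n : nat) : (x * n%:R)%:A = x%:A * (n%:R : A).
Proof. by rewrite !mulr_natr scalerMnl. Qed.

Lemma emb1_lift (M : 'I_N -> 'I_N -> C) :
  emb1 (fun i j => (M i j)%:A : A) = lift2 A (emb1 M).
Proof. by apply: funext4 => a b c d; rewrite /lift2 /emb1 natalg. Qed.

Lemma emb2_lift (M : 'I_N -> 'I_N -> C) :
  emb2 (fun i j => (M i j)%:A : A) = lift2 A (emb2 M).
Proof.
apply: funext4 => a b c d; rewrite /lift2 /emb2 mulrC natalg.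
by rewrite commr_nat.
Qed.

Lemma mul2Zl s (X Y : op) : mul2 (scale2 s X) Y = scale2 s (mul2 X Y).
Proof.
apply: funext4 => a b c d; rewrite /mul2 /scale2 scaler_sumr.
apply: eq_bigr => x _; rewrite scaler_sumr; apply: eq_bigr => y _.
by rewrite scalerAl.
Qed.

Lemma mul2Zr s (X Y : op) : mul2 X (scale2 s Y) = scale2 s (mul2 X Y).
Proof.
apply: funext4 => a b c d; rewrite /mul2 /scale2 scaler_sumr.
apply: eq_bigr => x _; rewrite scaler_sumr; apply: eq_bigr => y _.
by rewrite scalerAr.
Qed.

Lemma ev_e1c1 (M : 'I_N -> 'I_N -> A) w a b c d :
  mul2 (emb1 M) (c1 w) a b c d = (\sum_(x < N) M a x * w x) * ((c == z) && (b == d))%:R.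
Proof.
rewrite /mul2 /emb1 /c1 mulr_suml; apply: eq_bigr => x _.
rewrite (sum_only _ b); last by side.
by z1; rewrite mulrA.
Qed.

Lemma c1_lin s v (M : 'I_N -> 'I_N -> A) w :
  c1 (fun i => s *: (v i + \sum_(j < N) M i j * w j))
  = scale2 s (add2 (c1 v) (mul2 (emb1 M) (c1 w))).
Proof.
apply: funext4 => a b c d; rewrite /scale2 /add2 ev_e1c1 /c1.
by rewrite -scalerAl mulrDl.
Qed.

Lemma c2_lin s v (M : 'I_N -> 'I_N -> A) w :
  c2 (fun i => s *: (v i + \sum_(j < N) M i j * w j))
  = scale2 s (add2 (c2 v) (mul2 (emb2 M) (c2 w))).
Proof.
by rewrite -swap2_c1 c1_lin swap2_scale swap2_add swap2_mul swap2_c1 swap2_emb1 swap2_c1.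
Qed.

Lemma ev_r1e1 (M : 'I_N -> 'I_N -> A) w a b c d :
  mul2 (r1 w) (emb1 M) a b c d = (\sum_(x < N) w x * M x c) * ((a == z) && (b == d))%:R.
Proof.
rewrite /mul2 /emb1 /r1 mulr_suml; apply: eq_bigr => x _.
rewrite (sum_only _ b); last by side.
by z1; rewrite bcast.
Qed.

Lemma r1_lin s v (M : 'I_N -> 'I_N -> A) w :
  r1 (fun i => s *: (v i + \sum_(j < N) w j * M j i))
  = scale2 s (add2 (r1 v) (mul2 (r1 w) (emb1 M))).
Proof.
apply: funext4 => a b c d; rewrite /scale2 /add2 ev_r1e1 /r1.
by rewrite -scalerAl mulrDl.
Qed.

Lemma r2_lin s v (M : 'I_N -> 'I_N -> A) w :
  r2 (fun i => s *: (v i + \sum_(j < N) w j * M j i))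
  = scale2 s (add2 (r2 v) (mul2 (r2 w) (emb2 M))).
Proof.
by rewrite -swap2_r1 r1_lin swap2_scale swap2_add swap2_mul swap2_r1 swap2_emb1 swap2_r1.
Qed.


Ltac ev := rewrite /mul2 /c1 /c2 /r1 /r2 /emb1 /emb2 /Dl.

Lemma ev_c1c2 v w i j : mul2 (c1 v) (c2 w) i j z z = v i * w j.
Proof.
ev; rewrite (sum_only _ z); last by side.
rewrite (sum_only _ j); last by side.
by z1.
Qed.

Lemma ev_c2c1 v w i j : mul2 (c2 w) (c1 v) i j z z = w j * v i.
Proof.
ev; rewrite (sum_only _ i); last by side.
rewrite (sum_only _ z); last by side.
by z1.
Qed.

Lemma ev_r1r2 v w i j : mul2 (r1 v) (r2 w) z z i j = v i * w j.
Proof.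
ev; rewrite (sum_only _ i); last by side.
rewrite (sum_only _ z); last by side.
by z1.
Qed.

Lemma ev_r2r1 v w i j : mul2 (r2 w) (r1 v) z z i j = w j * v i.
Proof.
ev; rewrite (sum_only _ z); last by side.
rewrite (sum_only _ j); last by side.
by z1.
Qed.

Lemma ev_c1r2 v w i j : mul2 (c1 v) (r2 w) i z z j = v i * w j.
Proof.
ev; rewrite (sum_only _ z); last by side.
rewrite (sum_only _ z); last by side.
by z1.
Qed.

Lemma ev_r2X w (X : op) i c d : mul2 (r2 w) X i z c d = \sum_(y < N) w y * X i y c d.
Proof.
ev; rewrite (sum_only _ i); last by side.
by apply: eq_bigr => y _; z1.
Qed.

Lemma ev_Xc1 v (X : op) i j d : mul2 X (c1 v) i j z d = \sum_(x < N) X i j x d * v x.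
Proof.
ev; apply: eq_bigr => x _; rewrite (sum_only _ d); last by side.
by z1.
Qed.

Lemma ev_c1e2 v M i j l : mul2 (c1 v) (emb2 M) i j z l = v i * M j l.
Proof.
ev; rewrite (sum_only _ z); last by side.
rewrite (sum_only _ j); last by side.
by z1.
Qed.

Lemma ev_e2X (M : 'I_N -> 'I_N -> A) (X : op) a b c d :
  mul2 (emb2 M) X a b c d = \sum_(y < N) M b y * X a y c d.
Proof.
ev; rewrite (sum_only _ a); last by side.
by apply: eq_bigr => y _; z1.
Qed.

Lemma ev_e1X (M : 'I_N -> 'I_N -> A) (X : op) a b c d :
  mul2 (emb1 M) X a b c d = \sum_(x < N) M a x * X x b c d.
Proof.
ev; apply: eq_bigr => x _; rewrite (sum_only _ b); last by side.
by z1.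
Qed.

Lemma ev_e1r2 M w i j l : mul2 (emb1 M) (r2 w) i z j l = M i j * w l.
Proof.
ev; rewrite (sum_only _ j); last by side.
rewrite (sum_only _ z); last by side.
by z1.
Qed.

Lemma ev_L (L : op2 C N) (X : op) a b c d :
  mul2 (lift2 A L) X a b c d = \sum_(x < N) \sum_(y < N) L a b x y *: X x y c d.
Proof.
by rewrite /mul2 /lift2; apply: eq_bigr => x _; apply: eq_bigr => y _; rewrite mulr_algl.
Qed.

Lemma ev_XL (L : op2 C N) (X : op) a b c d :
  mul2 X (lift2 A L) a b c d = \sum_(x < N) \sum_(y < N) L x y c d *: X a b x y.
Proof.
by rewrite /mul2 /lift2; apply: eq_bigr => x _; apply: eq_bigr => y _; rewrite mulr_algr.
Qed.

Lemma ev_D e i j : Dl e i z z j = e * (i == j)%:R.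
Proof. by rewrite /Dl !eqxx !andbT. Qed.

Lemma ev_De2 e M i j : mul2 (Dl e) (emb2 M) i z z j = e * M i j.
Proof.
ev; rewrite (sum_only _ z); last by side.
rewrite (sum_only _ i); last by side.
by z1.
Qed.

Lemma ev_e1D e M i j : mul2 (emb1 M) (Dl e) i z z j = M i j * e.
Proof.
ev; rewrite (sum_only _ j); last by side.
rewrite (sum_only _ z); last by side.
by z1.
Qed.

Lemma c1e2C v (M : 'I_N -> 'I_N -> A) :
  (forall i j k, v i * M j k = M j k * v i) ->
  mul2 (c1 v) (emb2 M) = mul2 (emb2 M) (c1 v).
Proof.
move=> h; apply: funext4 => a b c d; ev.
rewrite (sum_only _ z); last by side.
rewrite (sum_only _ b); last by side.
rewrite (sum_only _ a); last by side.
rewrite (sum_only _ d); last by side.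
z1; rewrite (eq_sym z c); case: (c == z); z1; z0; by rewrite ?h.
Qed.

Lemma e1r2C w (M : 'I_N -> 'I_N -> A) :
  (forall i j k, w i * M j k = M j k * w i) ->
  mul2 (emb1 M) (r2 w) = mul2 (r2 w) (emb1 M).
Proof.
move=> h; apply: funext4 => a b c d; ev.
rewrite (sum_only _ c); last by side.
rewrite (sum_only _ z); last by side.
rewrite (sum_only _ a); last by side.
rewrite (sum_only _ d); last by side.
z1; case: (b == z); z1; z0; by rewrite ?h.
Qed.


Lemma gen_c1c2 v w i j c d :
  mul2 (c1 v) (c2 w) i j c d = v i * w j * ((c == z) && (d == z))%:R.
Proof.
ev; rewrite (sum_only _ c); last by side.
rewrite (sum_only _ j); last by side.
by z1; rewrite ?(eq_sym z) ?bcast ?castr ?mulrA.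
Qed.

Lemma gen_c2c1 v w i j c d :
  mul2 (c2 w) (c1 v) i j c d = w j * v i * ((c == z) && (d == z))%:R.
Proof.
ev; rewrite (sum_only _ i); last by side.
rewrite (sum_only _ z); last by side.
by z1; rewrite ?(eq_sym z) ?bcast ?castr ?mulrA.
Qed.

Lemma gen_r1r2 v w i j c d :
  mul2 (r1 v) (r2 w) i j c d = v c * w d * ((i == z) && (j == z))%:R.
Proof.
ev; rewrite (sum_only _ c); last by side.
rewrite (sum_only _ z); last by side.
by z1; rewrite ?(eq_sym z) ?bcast ?castr ?mulrA.
Qed.

Lemma gen_r2r1 v w i j c d :
  mul2 (r2 w) (r1 v) i j c d = w d * v c * ((i == z) && (j == z))%:R.
Proof.
ev; rewrite (sum_only _ z); last by side.
rewrite (sum_only _ d); last by side.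
by z1; rewrite ?(eq_sym z) ?bcast ?castr ?mulrA.
Qed.

Lemma gen_c1r2 v w i j c d :
  mul2 (c1 v) (r2 w) i j c d = v i * w d * ((c == z) && (j == z))%:R.
Proof.
ev; rewrite (sum_only _ c); last by side.
rewrite (sum_only _ z); last by side.
by z1; rewrite ?(eq_sym z) ?bcast ?castr ?mulrA.
Qed.

Lemma gen_r2X w (X : op) i j c d :
  mul2 (r2 w) X i j c d = (\sum_(y < N) w y * X i y c d) * (j == z)%:R.
Proof.
ev; rewrite (sum_only _ i); last by side.
rewrite mulr_suml; apply: eq_bigr => y _; z1.
by rewrite -!mulrA; congr (_ * _); rewrite commr_nat.
Qed.

Lemma gen_Xc1 v (X : op) i j c d :
  mul2 X (c1 v) i j c d = (\sum_(x < N) X i j x d * v x) * (c == z)%:R.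
Proof.
ev; rewrite mulr_suml; apply: eq_bigr => x _; rewrite (sum_only _ d); last by side.
by z1; rewrite ?(eq_sym z) ?bcast ?castr ?mulrA.
Qed.

Lemma gen_e1c2 (M : 'I_N -> 'I_N -> A) w i j c d :
  mul2 (emb1 M) (c2 w) i j c d = M i c * w j * (d == z)%:R.
Proof.
ev; rewrite (sum_only _ c); last by side.
rewrite (sum_only _ j); last by side.
by z1; rewrite ?(eq_sym z) ?bcast ?castr ?mulrA.
Qed.

Lemma gen_c2e1 (M : 'I_N -> 'I_N -> A) w i j c d :
  mul2 (c2 w) (emb1 M) i j c d = w j * M i c * (d == z)%:R.
Proof.
ev; rewrite (sum_only _ i); last by side.
rewrite (sum_only _ z); last by side.
by z1; rewrite ?(eq_sym z) ?bcast ?castr ?mulrA.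
Qed.

Lemma gen_e1r2 (M : 'I_N -> 'I_N -> A) w i j c d :
  mul2 (emb1 M) (r2 w) i j c d = M i c * w d * (j == z)%:R.
Proof.
ev; rewrite (sum_only _ c); last by side.
rewrite (sum_only _ z); last by side.
by z1; rewrite ?(eq_sym z) ?bcast ?castr ?mulrA.
Qed.

End Alg.
Arguments c1 {C A N}.
Arguments c2 {C A N}.
Arguments r1 {C A N}.
Arguments r2 {C A N}.
Arguments Dl {C A N}.
Arguments scale2 {C A N}.


Section Main.
Variables (K : realType) (N : nat) (hN : (0 < N)%N).
Local Notation C := (complex K).
Variables (R : K -> K -> op2 C N) (hU : unitarity R).
Variables (A : algType C) (a ad : 'I_N -> K -> A) (delta : K -> A).
Hypothesis hdelta0 : forall x : K, x != 0 -> delta x = 0.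
Hypothesis hdeltaC : forall (x : K) (y : A), delta x * y = y * delta x.
Hypothesis hZF1 : forall (k1 k2 : K) (i j : 'I_N),
     a i k1 * a j k2
     = \sum_(x < N) \sum_(y < N) R k2 k1 j i y x *: (a y k2 * a x k1).
Hypothesis hZF2 : forall (k1 k2 : K) (i j : 'I_N),
     ad i k1 * ad j k2
     = \sum_(x < N) \sum_(y < N) R k2 k1 y x j i *: (ad y k2 * ad x k1).
Hypothesis hZF3 : forall (k1 k2 : K) (i j : 'I_N),
     a i k1 * ad j k2
     = \sum_(x < N) \sum_(y < N) R k1 k2 i x y j *: (ad x k2 * a y k1)
       + delta (k1 - k2) * (i == j)%:R.
Variables (T Tinv : K -> 'M[A]_N).
Hypothesis hTinv1 : forall k : K, T k *m Tinv k = 1%:M.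
Hypothesis hTinv2 : forall k : K, Tinv k *m T k = 1%:M.
Hypothesis hTa : forall (k1 k2 : K) (i j l : 'I_N),
     T k1 i j * a l k2
     = \sum_(x < N) \sum_(y < N) R k2 k1 l i y x *: (a y k2 * T k1 x j).
Hypothesis hTad : forall (k1 k2 : K) (i j l : 'I_N),
     T k1 i j * ad l k2
     = \sum_(x < N) \sum_(y < N) R k1 k2 i y x l *: (ad y k2 * T k1 x j).
Hypothesis hTT : forall k1 k2 : K,
     mul2 (@lift2 _ A N (R k1 k2))
          (mul2 (emb1 (fun i j => T k1 i j)) (emb2 (fun i j => T k2 i j)))
     = mul2 (mul2 (emb2 (fun i j => T k2 i j)) (emb1 (fun i j => T k1 i j)))
            (@lift2 _ A N (R k1 k2)).
Variable (B : K -> 'M[C]_N).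
Hypothesis hB : forall k1 k2 : K, reflection_eq R (fun k i j => B k i j) k1 k2.
Hypothesis hBinv : forall k : K, B k *m B (- k) = 1%:M.

Local Notation op := (op2 A N).
Local Notation "X ** Y" := (mul2 X Y) (at level 43, right associativity).
Let z : 'I_N := Ordinal hN.

Definition bm (k : K) : 'M[A]_N := T k *m map_mx (in_alg A) (B k) *m Tinv (- k).

Definition Rop k k' : op := lift2 A (R k k').
Definition Sw k k' : op := swap2 (Rop k k').
Definition T1 k : op := emb1 (fun i j => T k i j).
Definition T2 k : op := emb2 (fun i j => T k i j).
Definition Ti1 k : op := emb1 (fun i j => Tinv k i j).
Definition Ti2 k : op := emb2 (fun i j => Tinv k i j).
Definition B1 k : op := emb1 (fun i j => (B k i j)%:A).
Definition B2 k : op := emb2 (fun i j => (B k i j)%:A).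
Definition b1 k : op := emb1 (fun i j => bm k i j).
Definition b2 k : op := emb2 (fun i j => bm k i j).
Definition a1 k : op := c1 z (fun i => a i k).
Definition a2 k : op := c2 z (fun i => a i k).
Definition d1 k : op := r1 z (fun i => ad i k).
Definition d2 k : op := r2 z (fun i => ad i k).
Definition Dd x : op := Dl z (delta x).

Lemma cps (X Y : op) : X = Y -> forall U, X ** U = Y ** U.
Proof. by move=> ->. Qed.

Lemma unitR k1 k2 U : Rop k1 k2 ** Sw k2 k1 ** U = U.
Proof.
rewrite mul2A; have -> : Rop k1 k2 ** Sw k2 k1 = @id2 A N.
  by rewrite /Sw /Rop -lift2_mul hU lift2_id.
exact: mul2_1l.
Qed.

Lemma unitS k1 k2 U : Sw k2 k1 ** Rop k1 k2 ** U = U.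
Proof.
rewrite mul2A; have -> : Sw k2 k1 ** Rop k1 k2 = @id2 A N.
  rewrite -[Rop k1 k2]swap2K -swap2_mul.
  by rewrite /Sw /Rop -lift2_mul hU lift2_id swap2_id.
exact: mul2_1l.
Qed.

Lemma TiT1 k U : Ti1 k ** T1 k ** U = U.
Proof. by rewrite mul2A /Ti1 /T1 -emb1_mul hTinv2 emb1_one mul2_1l. Qed.
Lemma TTi1 k U : T1 k ** Ti1 k ** U = U.
Proof. by rewrite mul2A /Ti1 /T1 -emb1_mul hTinv1 emb1_one mul2_1l. Qed.
Lemma TiT2 k U : Ti2 k ** T2 k ** U = U.
Proof. by rewrite mul2A /Ti2 /T2 -emb2_mul hTinv2 emb2_one mul2_1l. Qed.
Lemma TTi2 k U : T2 k ** Ti2 k ** U = U.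
Proof. by rewrite mul2A /Ti2 /T2 -emb2_mul hTinv1 emb2_one mul2_1l. Qed.

Lemma mapB k : (fun i j => map_mx (in_alg A) (B k) i j) = (fun i j => (B k i j)%:A).
Proof. by apply: functional_extensionality => i; apply: functional_extensionality => j; rewrite mxE. Qed.

Lemma b1E k U : b1 k ** U = T1 k ** B1 k ** Ti1 (- k) ** U.
Proof. by rewrite /b1 /bm !emb1_mul mapB -!mul2A. Qed.
Lemma b2E k U : b2 k ** U = T2 k ** B2 k ** Ti2 (- k) ** U.
Proof. by rewrite /b2 /bm !emb2_mul mapB -!mul2A. Qed.




Lemma swap_lift (M : op2 C N) : swap2 (lift2 A M) = lift2 A (swap2 M).
Proof. by []. Qed.

Ltac sumeq := apply: eq_bigr => ? _.

Lemma ZF1op k1 k2 : a1 k1 ** a2 k2 = Sw k2 k1 ** a2 k2 ** a1 k1.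
Proof.
apply: funext4 => i j c d; rewrite /a1 /a2 /Sw /Rop gen_c1c2 swap_lift ev_L.
under eq_bigr => x _ do under eq_bigr => y _ do rewrite gen_c2c1.
rewrite hZF1 mulr_suml; apply: eq_bigr => x _; rewrite mulr_suml; apply: eq_bigr => y _.
by rewrite /swap2 [RHS]scalerAl.
Qed.

Lemma ZF1 k1 k2 U : a1 k1 ** a2 k2 ** U = Sw k2 k1 ** a2 k2 ** a1 k1 ** U.
Proof. by rewrite mul2A ZF1op -!mul2A. Qed.

Lemma ZF2op k1 k2 : d1 k1 ** d2 k2 = (d2 k2 ** d1 k1) ** Sw k2 k1.
Proof.
apply: funext4 => i j c d; rewrite /d1 /d2 /Sw /Rop gen_r1r2 swap_lift ev_XL.
under eq_bigr => x _ do under eq_bigr => y _ do rewrite gen_r2r1.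
rewrite hZF2 mulr_suml; apply: eq_bigr => x _; rewrite mulr_suml; apply: eq_bigr => y _.
by rewrite /swap2 [RHS]scalerAl.
Qed.

Lemma ZF2 k1 k2 U : d1 k1 ** d2 k2 ** U = d2 k2 ** d1 k1 ** Sw k2 k1 ** U.
Proof. by rewrite mul2A ZF2op -!mul2A. Qed.

Lemma ZF3op k1 k2 : a1 k1 ** d2 k2 = add2 (d2 k2 ** Rop k1 k2 ** a1 k1) (Dd (k1 - k2)).
Proof.
apply: funext4 => i j c d; rewrite /a1 /d2 /Dd /add2 /Dl gen_c1r2 gen_r2X.
under eq_bigr => y _ do rewrite gen_Xc1.
case: (c == z); case: (j == z); rewrite /= ?andbF ?andbT; z1; z0; try done;
  try (by rewrite big1 // => y _; z0).
rewrite hZF3; congr (_ + _).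
apply: eq_bigr => x _; rewrite mulr1 mulr_sumr; apply: eq_bigr => y _.
by rewrite /Rop /lift2 mulr_algl -scalerAr.
Qed.

Lemma ZF3 k1 k2 U : a1 k1 ** d2 k2 ** U = add2 (d2 k2 ** Rop k1 k2 ** a1 k1 ** U) (Dd (k1 - k2) ** U).
Proof. by rewrite mul2A ZF3op mul2Dl -!mul2A. Qed.

Lemma Taop k1 k2 : T1 k1 ** a2 k2 = Sw k2 k1 ** a2 k2 ** T1 k1.
Proof.
apply: funext4 => i j c d; rewrite /T1 /a2 /Sw /Rop gen_e1c2 swap_lift ev_L.
under eq_bigr => x _ do under eq_bigr => y _ do rewrite gen_c2e1.
rewrite hTa mulr_suml; apply: eq_bigr => x _; rewrite mulr_suml; apply: eq_bigr => y _.
by rewrite /swap2 [RHS]scalerAl.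
Qed.

Lemma Ta k1 k2 U : T1 k1 ** a2 k2 ** U = Sw k2 k1 ** a2 k2 ** T1 k1 ** U.
Proof. by rewrite mul2A Taop -!mul2A. Qed.

Lemma Tadop k1 k2 : T1 k1 ** d2 k2 = d2 k2 ** Rop k1 k2 ** T1 k1.
Proof.
apply: funext4 => i j c d; rewrite /T1 /d2 /Rop gen_e1r2 gen_r2X.
under eq_bigr => y _ do rewrite ev_L.
congr (_ * _); rewrite hTad xch; apply: eq_bigr => y _.
rewrite mulr_sumr; apply: eq_bigr => x _.
rewrite /emb1 (sum_only _ d); last first.
  by move=> y' hy; rewrite (negbTE hy) mulr0n mulr0 scaler0.
by rewrite eqxx mulr1 scalerAr.
Qed.

Lemma Tad k1 k2 U : T1 k1 ** d2 k2 ** U = d2 k2 ** Rop k1 k2 ** T1 k1 ** U.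
Proof. by rewrite mul2A Tadop -!mul2A. Qed.

Lemma TT k1 k2 U : Rop k1 k2 ** T1 k1 ** T2 k2 ** U = T2 k2 ** T1 k1 ** Rop k1 k2 ** U.
Proof. have h := hTT k1 k2; rewrite !mul2A in h. by rewrite !mul2A /Rop /T1 /T2 h. Qed.

Lemma TTs k1 k2 U : Sw k2 k1 ** T2 k2 ** T1 k1 ** U = T1 k1 ** T2 k2 ** Sw k2 k1 ** U.
Proof.
have h := f_equal (@swap2 A N) (hTT k2 k1).
rewrite !swap2_mul swap2_emb1 swap2_emb2 in h.
rewrite !mul2A in h. by rewrite !mul2A /Sw /Rop /T1 /T2 h.
Qed.

Lemma Bref k1 k2 U :
  Rop k1 k2 ** B1 k1 ** Sw k2 (- k1) ** B2 k2 ** U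
  = B2 k2 ** Rop k1 (- k2) ** B1 k1 ** Sw (- k2) (- k1) ** U.
Proof.
have h := f_equal (@lift2 C A N) (hB k1 k2).
rewrite !lift2_mul -!emb1_lift -!emb2_lift in h.
by rewrite !mul2A /Rop /Sw /B1 /B2 !swap_lift h.
Qed.

Lemma B1T2 k k' U : B1 k ** T2 k' ** U = T2 k' ** B1 k ** U.
Proof. by rewrite !mul2A /B1 /T2 emb12C // => *; rewrite algC. Qed.
Lemma T1B2 k k' U : T1 k ** B2 k' ** U = B2 k' ** T1 k ** U.
Proof. by rewrite !mul2A /B2 /T1 emb12C // => *; rewrite algC. Qed.
Lemma B1Ti2 k k' U : B1 k ** Ti2 k' ** U = Ti2 k' ** B1 k ** U.
Proof. by rewrite !mul2A /B1 /Ti2 emb12C // => *; rewrite algC. Qed.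
Lemma Ti1B2 k k' U : Ti1 k ** B2 k' ** U = B2 k' ** Ti1 k ** U.
Proof. by rewrite !mul2A /B2 /Ti1 emb12C // => *; rewrite algC. Qed.
Lemma a1B2 k k' U : a1 k ** B2 k' ** U = B2 k' ** a1 k ** U.
Proof. by rewrite !mul2A /B2 /a1 c1e2C // => *; rewrite algC. Qed.
Lemma B1d2 k k' U : B1 k ** d2 k' ** U = d2 k' ** B1 k ** U.
Proof. by rewrite !mul2A /B1 /d2 e1r2C // => *; rewrite algC. Qed.




Lemma sT1 k : swap2 (T1 k) = T2 k. Proof. exact: swap2_emb1. Qed.
Lemma sT2 k : swap2 (T2 k) = T1 k. Proof. exact: swap2_emb2. Qed.
Lemma sb1 k : swap2 (b1 k) = b2 k. Proof. exact: swap2_emb1. Qed.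
Lemma sb2 k : swap2 (b2 k) = b1 k. Proof. exact: swap2_emb2. Qed.
Lemma sa1 k : swap2 (a1 k) = a2 k. Proof. exact: swap2_c1. Qed.
Lemma sa2 k : swap2 (a2 k) = a1 k. Proof. exact: swap2_c2. Qed.
Lemma sd1 k : swap2 (d1 k) = d2 k. Proof. exact: swap2_r1. Qed.
Lemma sd2 k : swap2 (d2 k) = d1 k. Proof. exact: swap2_r2. Qed.
Lemma sSw k k' : swap2 (Sw k k') = Rop k k'. Proof. by []. Qed.
Lemma sRop k k' : swap2 (Rop k k') = Sw k k'. Proof. by []. Qed.

Ltac sw h := rewrite !swap2_mul ?sT1 ?sT2 ?sb1 ?sb2 ?sa1 ?sa2 ?sd1 ?sd2 ?sSw ?sRop ?swap2K in h.

Lemma Tas k1 k2 U : T2 k2 ** a1 k1 ** U = Rop k1 k2 ** a1 k1 ** T2 k2 ** U.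
Proof.
have h := f_equal (@swap2 A N) (Ta k2 k1 (swap2 U)); sw h; exact: h.
Qed.

Lemma a1T2 k1 k2 U : a1 k1 ** T2 k2 ** U = Sw k2 k1 ** T2 k2 ** a1 k1 ** U.
Proof. by rewrite Tas unitS. Qed.

Lemma a1Ti2 k1 k U : a1 k1 ** Ti2 k ** U = Ti2 k ** Rop k1 k ** a1 k1 ** U.
Proof.
transitivity (Ti2 k ** T2 k ** a1 k1 ** Ti2 k ** U); first by rewrite TiT2.
by rewrite Tas TTi2.
Qed.

Lemma D1 k1 k2 U : a1 k1 ** b2 k2 ** U = Sw k2 k1 ** b2 k2 ** Rop k1 (- k2) ** a1 k1 ** U.
Proof. by rewrite !b2E a1T2 a1B2 a1Ti2. Qed.

Lemma D1s k1 k2 U : a2 k2 ** b1 k1 ** U = Rop k1 k2 ** b1 k1 ** Sw k2 (- k1) ** a2 k2 ** U.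
Proof.
have h := f_equal (@swap2 A N) (D1 k2 k1 (swap2 U)); sw h; exact: h.
Qed.

Lemma Ti1d2 k k2 U : Ti1 k ** d2 k2 ** U = d2 k2 ** Ti1 k ** Sw k2 k ** U.
Proof.
transitivity (Ti1 k ** d2 k2 ** Rop k k2 ** T1 k ** Ti1 k ** Sw k2 k ** U).
  by rewrite TTi1 unitR.
by rewrite -Tad TiT1.
Qed.

Lemma D2 k1 k2 U : b1 k1 ** d2 k2 ** U = d2 k2 ** Rop k1 k2 ** b1 k1 ** Sw k2 (- k1) ** U.
Proof. by rewrite !b1E Ti1d2 B1d2 Tad. Qed.

Lemma D2s k1 k2 U : b2 k2 ** d1 k1 ** U = d1 k1 ** Sw k2 k1 ** b2 k2 ** Rop k1 (- k2) ** U.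
Proof.
have h := f_equal (@swap2 A N) (D2 k2 k1 (swap2 U)); sw h; exact: h.
Qed.

Lemma hb' k1 k2 U : Ti1 (- k1) ** Sw k2 (- k1) ** T2 k2 ** U = T2 k2 ** Sw k2 (- k1) ** Ti1 (- k1) ** U.
Proof.
transitivity (Ti1 (- k1) ** Sw k2 (- k1) ** T2 k2 ** T1 (- k1) ** Ti1 (- k1) ** U).
  by rewrite TTi1.
by rewrite TTs TiT1.
Qed.

Lemma hc k1 k2 U : Sw (- k2) (- k1) ** Ti1 (- k1) ** Ti2 (- k2) ** U
  = Ti2 (- k2) ** Ti1 (- k1) ** Sw (- k2) (- k1) ** U.
Proof.
transitivity (Ti2 (- k2) ** Ti1 (- k1) ** T1 (- k1) ** T2 (- k2) ** Sw (- k2) (- k1) ** Ti1 (- k1) ** Ti2 (- k2) ** U).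
  by rewrite TiT1 TiT2.
by rewrite -TTs TTi1 TTi2.
Qed.

Lemma hd k1 k2 U : Ti2 (- k2) ** Rop k1 (- k2) ** T1 k1 ** U = T1 k1 ** Rop k1 (- k2) ** Ti2 (- k2) ** U.
Proof.
transitivity (Ti2 (- k2) ** Rop k1 (- k2) ** T1 k1 ** T2 (- k2) ** Ti2 (- k2) ** U).
  by rewrite TTi2.
by rewrite TT TiT2.
Qed.

Lemma D3 k1 k2 U :
  Rop k1 k2 ** b1 k1 ** Sw k2 (- k1) ** b2 k2 ** U
  = b2 k2 ** Rop k1 (- k2) ** b1 k1 ** Sw (- k2) (- k1) ** U.
Proof.
by rewrite !b1E !b2E hb' B1T2 Ti1B2 TT Bref hc T1B2 B1Ti2 -hd.
Qed.




Let s : C := 2^-1.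
Definition atl i k : A := s *: (a i k + \sum_(j < N) bm k i j * a j (- k)).
Definition adtl i k : A := s *: (ad i k + \sum_(j < N) ad j (- k) * bm (- k) j i).
Definition At1 k : op := c1 z (fun i => atl i k).
Definition At2 k : op := c2 z (fun i => atl i k).
Definition Ad1 k : op := r1 z (fun i => adtl i k).
Definition Ad2 k : op := r2 z (fun i => adtl i k).

Lemma At1E k : At1 k = scale2 s (add2 (a1 k) (b1 k ** a1 (- k))).
Proof. exact: c1_lin. Qed.
Lemma At2E k : At2 k = scale2 s (add2 (a2 k) (b2 k ** a2 (- k))).
Proof. exact: c2_lin. Qed.
Lemma Ad1E k : Ad1 k = scale2 s (add2 (d1 k) (d1 (- k) ** b1 (- k))).
Proof. exact: r1_lin. Qed.
Lemma Ad2E k : Ad2 k = scale2 s (add2 (d2 k) (d2 (- k) ** b2 (- k))).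
Proof. exact: r2_lin. Qed.

Ltac expand := rewrite ?At1E ?At2E ?Ad1E ?Ad2E ?(mul2Zl, mul2Zr, mul2Dl, mul2Dr) -?mul2A.

Lemma t2 k1 k2 U : a1 k1 ** b2 k2 ** a2 (- k2) ** U = Sw k2 k1 ** b2 k2 ** a2 (- k2) ** a1 k1 ** U.
Proof. by rewrite D1 ZF1 unitR. Qed.
Lemma t3 k1 k2 U : b1 k1 ** a1 (- k1) ** a2 k2 ** U = Sw k2 k1 ** a2 k2 ** b1 k1 ** a1 (- k1) ** U.
Proof. by rewrite ZF1 D1s unitS. Qed.
Lemma t4 k1 k2 U : b1 k1 ** a1 (- k1) ** b2 k2 ** a2 (- k2) ** U
  = Sw k2 k1 ** b2 k2 ** a2 (- k2) ** b1 k1 ** a1 (- k1) ** U.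
Proof. by rewrite D1 ZF1 unitR D1s -D3 unitS. Qed.

Lemma C1op k1 k2 U : At1 k1 ** At2 k2 ** U = Sw k2 k1 ** At2 k2 ** At1 k1 ** U.
Proof.
expand; rewrite ZF1 t2 t3 t4.
by apply: funext4 => i j c d; rewrite /add2 /scale2 !scalerDr addrACA.
Qed.


Lemma u2 k1 k2 U : d1 k1 ** d2 (- k2) ** b2 (- k2) ** U = d2 (- k2) ** b2 (- k2) ** d1 k1 ** Sw k2 k1 ** U.
Proof. by rewrite ZF2 D2s opprK unitR. Qed.
Lemma u3 k1 k2 U : d1 (- k1) ** b1 (- k1) ** d2 k2 ** U = d2 k2 ** d1 (- k1) ** b1 (- k1) ** Sw k2 k1 ** U.
Proof. by rewrite D2 ZF2 unitS opprK. Qed.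
Lemma u4 k1 k2 U : d1 (- k1) ** b1 (- k1) ** d2 (- k2) ** b2 (- k2) ** U
  = d2 (- k2) ** b2 (- k2) ** d1 (- k1) ** b1 (- k1) ** Sw k2 k1 ** U.
Proof.
have e := D3 (- k1) (- k2) U; rewrite !opprK in e.
by rewrite D2 ZF2 unitS D2s !opprK -e unitS.
Qed.

Lemma C2op k1 k2 U : Ad1 k1 ** Ad2 k2 ** U = Ad2 k2 ** Ad1 k1 ** Sw k2 k1 ** U.
Proof.
expand; rewrite ZF2 u2 u3 u4.
by apply: funext4 => i j c d; rewrite /add2 /scale2 !scalerDr addrACA.
Qed.

Lemma v2 k1 k2 U : a1 k1 ** d2 (- k2) ** b2 (- k2) ** U
  = add2 (d2 (- k2) ** b2 (- k2) ** Rop k1 k2 ** a1 k1 ** U) (Dd (k1 - - k2) ** b2 (- k2) ** U).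
Proof. by rewrite ZF3 D1 unitR opprK. Qed.
Lemma v3 k1 k2 U : b1 k1 ** a1 (- k1) ** d2 k2 ** U
  = add2 (d2 k2 ** Rop k1 k2 ** b1 k1 ** a1 (- k1) ** U) (b1 k1 ** Dd (- k1 - k2) ** U).
Proof. by rewrite ZF3 mul2Dr D2 unitS. Qed.
Lemma v4 k1 k2 U : b1 k1 ** a1 (- k1) ** d2 (- k2) ** b2 (- k2) ** U
  = add2 (d2 (- k2) ** b2 (- k2) ** Rop k1 k2 ** b1 k1 ** a1 (- k1) ** U)
         (b1 k1 ** Dd (- k1 - - k2) ** b2 (- k2) ** U).
Proof. by rewrite ZF3 mul2Dr D2 unitS D1 D3 !opprK unitS. Qed.

Lemma C3op k1 k2 U : At1 k1 ** Ad2 k2 ** U = add2 (Ad2 k2 ** Rop k1 k2 ** At1 k1 ** U)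
  (scale2 s (scale2 s (add2 (add2 (Dd (k1 - k2) ** U) (Dd (k1 - - k2) ** b2 (- k2) ** U))
      (add2 (b1 k1 ** Dd (- k1 - k2) ** U) (b1 k1 ** Dd (- k1 - - k2) ** b2 (- k2) ** U))))).
Proof.
expand; rewrite ZF3 v2 v3 v4.
by apply: funext4 => i j c d; rewrite /add2 /scale2 !scalerDr; exact: perm8.
Qed.

Lemma w2 k1 k2 U : b1 k1 ** a1 (- k1) ** b2 k2 ** U = Sw k2 k1 ** b2 k2 ** Rop k1 (- k2) ** b1 k1 ** a1 (- k1) ** U.
Proof.
rewrite D1; symmetry.
transitivity (Sw k2 k1 ** b2 k2 ** Rop k1 (- k2) ** b1 k1 ** Sw (- k2) (- k1) ** Rop (- k1) (- k2) ** a1 (- k1) ** U).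
  by rewrite unitS.
by rewrite -D3 unitS.
Qed.

Lemma C4op k1 k2 U : At1 k1 ** b2 k2 ** U = Sw k2 k1 ** b2 k2 ** Rop k1 (- k2) ** At1 k1 ** U.
Proof. by expand; rewrite D1 w2. Qed.

Lemma y2 k1 k2 U : b1 k1 ** d2 (- k2) ** b2 (- k2) ** U = d2 (- k2) ** b2 (- k2) ** Rop k1 k2 ** b1 k1 ** Sw k2 (- k1) ** U.
Proof. by rewrite D2 D3 !opprK. Qed.

Lemma C5op k1 k2 U : b1 k1 ** Ad2 k2 ** U = Ad2 k2 ** Rop k1 k2 ** b1 k1 ** Sw k2 (- k1) ** U.
Proof. by expand; rewrite D2 y2. Qed.


Lemma ev_at i j c d {X Y : op} : X = Y -> X i j c d = Y i j c d.
Proof. by move=> ->. Qed.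

Lemma E1 k1 k2 i j : atl i k1 * atl j k2
  = \sum_(x < N) \sum_(y < N) R k2 k1 j i y x *: (atl y k2 * atl x k1).
Proof.
have := ev_at i j z z (C1op k1 k2 (@id2 A N)); rewrite !mul2_1r.
rewrite /At1 /At2 ev_c1c2 /Sw /Rop swap_lift ev_L => ->.
apply: eq_bigr => x _; apply: eq_bigr => y _.
by rewrite ev_c2c1.
Qed.

Lemma E2 k1 k2 i j : adtl i k1 * adtl j k2
  = \sum_(x < N) \sum_(y < N) R k2 k1 y x j i *: (adtl y k2 * adtl x k1).
Proof.
have := ev_at z z i j (C2op k1 k2 (@id2 A N)); rewrite !mul2_1r mul2A.
rewrite /Ad1 /Ad2 ev_r1r2 /Sw /Rop swap_lift ev_XL => ->.
apply: eq_bigr => x _; apply: eq_bigr => y _.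
by rewrite ev_r2r1.
Qed.

Lemma E4 k1 k2 i j l : atl i k1 * bm k2 j l
  = \sum_(x < N) \sum_(y < N) \sum_(y' < N) \sum_(z0 < N)
         R k2 k1 j i y x *: (bm k2 y y' * (R k1 (- k2) x y' z0 l *: atl z0 k1)).
Proof.
have := ev_at i j z l (C4op k1 k2 (@id2 A N)); rewrite !mul2_1r.
rewrite /At1 /b2 ev_c1e2 /Sw /Rop swap_lift ev_L => ->.
apply: eq_bigr => x _; apply: eq_bigr => y _.
rewrite ev_e2X scaler_sumr; apply: eq_bigr => y' _.
rewrite ev_Xc1 mulr_sumr scaler_sumr; apply: eq_bigr => z0 _.
by rewrite /lift2 mulr_algl.
Qed.

Lemma E5 k1 k2 i j l : bm k1 i j * adtl l k2
  = \sum_(z0 < N) \sum_(x < N) \sum_(x' < N) \sum_(y < N)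
         adtl z0 k2 * (R k1 k2 i z0 x y *: (bm k1 x x' * (R k2 (- k1) y x' l j)%:A)).
Proof.
have := ev_at i z j l (C5op k1 k2 (@id2 A N)); rewrite !mul2_1r.
rewrite /Ad2 /b1 ev_e1r2 ev_r2X => ->.
apply: eq_bigr => z0 _; rewrite /Rop ev_L mulr_sumr; apply: eq_bigr => x _.
rewrite mulr_sumr [RHS]xch; apply: eq_bigr => y _.
rewrite ev_e1X scaler_sumr mulr_sumr; apply: eq_bigr => x' _.
by [].
Qed.

Lemma E7 k : bm k *m bm (- k) = 1%:M.
Proof.
rewrite /bm opprK -!mulmxA (mulmxA (Tinv (- k))) hTinv2 mul1mx.
by rewrite (mulmxA (map_mx _ _)) -map_mxM hBinv map_mx1 mul1mx hTinv1.
Qed.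

Lemma half (X Y : A) : s *: (s *: ((X + Y) + (Y + X))) = s *: X + s *: Y.
Proof.
rewrite (addrC Y X) -mulr2n scalerA -scalerMnr scalerMnl -scalerDr; congr (_ *: _).
rewrite -mulrnAr -[_ *+ 2](mulr_natr (2^-1 : C) 2) mulVf ?mulr1 //.
by rewrite pnatr_eq0.
Qed.

Lemma E3 k1 k2 i j : atl i k1 * adtl j k2
  = \sum_(x < N) \sum_(y < N) R k1 k2 i x y j *: (adtl x k2 * atl y k1)
    + s *: (delta (k1 - k2) * (i == j)%:R) + s *: (delta (k1 + k2) * bm k1 i j).
Proof.
have := ev_at i z z j (C3op k1 k2 (@id2 A N)); rewrite !mul2_1r.
rewrite /At1 /Ad2 ev_c1r2 => ->.
rewrite /add2 /scale2 -[RHS]addrA; congr (_ + _).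
  rewrite ev_r2X; apply: eq_bigr => x _; rewrite ev_Xc1 mulr_sumr; apply: eq_bigr => y _.
  by rewrite /Rop /lift2 mulr_algl -scalerAr.
rewrite /Dd ev_D ev_De2 ev_e1D ev_e1X.
under eq_bigr => x _ do rewrite ev_De2.
have h4 : \sum_(x < N) bm k1 i x * (delta (- k1 - - k2) * bm (- k2) x j)
          = delta (k1 - k2) * (i == j)%:R.
  case: (eqVneq k1 k2) => [<-|ne].
    rewrite !subrr.
    under eq_bigr => x _ do rewrite mulrA -hdeltaC -mulrA.
    have e7 := f_equal (fun M : 'M[A]_N => M i j) (E7 k1); rewrite /= !mxE in e7.
    by rewrite -mulr_sumr e7.
  rewrite (hdelta0 (k1 - k2)); last by rewrite subr_eq0.
  rewrite (hdelta0 (- k1 - - k2)); last by rewrite subr_eq0 eqr_opp.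
  by rewrite mul0r big1 // => x _; rewrite mul0r mulr0.
have h2 : delta (k1 - - k2) * bm (- k2) i j = delta (k1 + k2) * bm k1 i j.
  rewrite opprK; case: (eqVneq (k1 + k2) 0) => [e|ne]; last by rewrite hdelta0 // !mul0r.
  have hk : k1 = - k2 by apply/eqP; rewrite -addr_eq0 e.
  by rewrite -hk.
have h3 : bm k1 i j * delta (- k1 - k2) = delta (k1 + k2) * bm k1 i j.
  rewrite -hdeltaC -opprD; case: (eqVneq (k1 + k2) 0) => [->|ne].
    by rewrite oppr0.
  by rewrite !hdelta0 ?mul0r // oppr_eq0.
by rewrite h4 h2 h3 half.
Qed.

Lemma E6 k1 k2 : reflection_eq (fun k k' => @lift2 _ A N (R k k')) (fun k i j => bm k i j) k1 k2.
Proof.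
have h := D3 k1 k2 (@id2 A N); rewrite !mul2_1r in h.
by rewrite /reflection_eq -!mul2A.
Qed.

End Main.

Theorem mainTheorem1
  (K : realType) (N : nat) (hN : (0 < N)%N)
  (* the R-matrix, R k1 k2 a b c d = <e_a (x) e_b| R(k1,k2) |e_c (x) e_d> *)
  (R : K -> K -> op2 (complex K) N)
  (hYB : yang_baxter R) (hU : unitarity R)
  (* the (completed) ZF algebra: an associative complex algebra *)
  (A : algType (complex K))
  (a ad : 'I_N -> K -> A)
  (* delta k stands for the c-number delta(k) (times the unit) *)
  (delta : K -> A)
  (hdelta0 : forall x : K, x != 0 -> delta x = 0)
  (hdeltaC : forall (x : K) (y : A), delta x * y = y * delta x)
  (* a_1 a_2 = R_21 a_2 a_1 *)
  (hZF1 : forall (k1 k2 : K) (i j : 'I_N),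
     a i k1 * a j k2
     = \sum_(x < N) \sum_(y < N) R k2 k1 j i y x *: (a y k2 * a x k1))
  (* a+_1 a+_2 = a+_2 a+_1 R_21 *)
  (hZF2 : forall (k1 k2 : K) (i j : 'I_N),
     ad i k1 * ad j k2
     = \sum_(x < N) \sum_(y < N) R k2 k1 y x j i *: (ad y k2 * ad x k1))
  (* a_1 a+_2 = a+_2 R_12 a_1 + delta_12 *)
  (hZF3 : forall (k1 k2 : K) (i j : 'I_N),
     a i k1 * ad j k2
     = \sum_(x < N) \sum_(y < N) R k1 k2 i x y j *: (ad x k2 * a y k1)
       + delta (k1 - k2) * (i == j)%:R)
  (* the well-bred vertex operator T and its inverse *)
  (T Tinv : K -> 'M[A]_N)
  (hTinv1 : forall k : K, T k *m Tinv k = 1%:M)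
  (hTinv2 : forall k : K, Tinv k *m T k = 1%:M)
  (* T_1 a_2 = R_21 a_2 T_1 *)
  (hTa : forall (k1 k2 : K) (i j l : 'I_N),
     T k1 i j * a l k2
     = \sum_(x < N) \sum_(y < N) R k2 k1 l i y x *: (a y k2 * T k1 x j))
  (* T_1 a+_2 = a+_2 R_12 T_1 *)
  (hTad : forall (k1 k2 : K) (i j l : 'I_N),
     T k1 i j * ad l k2
     = \sum_(x < N) \sum_(y < N) R k1 k2 i y x l *: (ad y k2 * T k1 x j))
  (* R_12 T_1 T_2 = T_2 T_1 R_12 *)
  (hTT : forall k1 k2 : K,
     mul2 (@lift2 _ A N (R k1 k2))
          (mul2 (emb1 (fun i j => T k1 i j)) (emb2 (fun i j => T k2 i j)))
     = mul2 (mul2 (emb2 (fun i j => T k2 i j)) (emb1 (fun i j => T k1 i j)))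
            (@lift2 _ A N (R k1 k2)))
  (* the numerical reflection matrix B *)
  (B : K -> 'M[complex K]_N)
  (hB : forall k1 k2 : K, reflection_eq R (fun k i j => B k i j) k1 k2)
  (hBinv : forall k : K, B k *m B (- k) = 1%:M) :
  let b : K -> 'M[A]_N :=
    fun k => T k *m map_mx (in_alg A) (B k) *m Tinv (- k) in
  let atil : 'I_N -> K -> A := fun i k =>
    (2^-1 : complex K) *: (a i k + \sum_(j < N) b k i j * a j (- k)) in
  let adtil : 'I_N -> K -> A := fun i k =>
    (2^-1 : complex K) *: (ad i k + \sum_(j < N) ad j (- k) * b (- k) j i) in
  (* ~a_1 ~a_2 = R_21 ~a_2 ~a_1 *)
  (forall (k1 k2 : K) (i j : 'I_N),
     atil i k1 * atil j k2
     = \sum_(x < N) \sum_(y < N) R k2 k1 j i y x *: (atil y k2 * atil x k1))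
  (* ~a+_1 ~a+_2 = ~a+_2 ~a+_1 R_21 *)
  /\ (forall (k1 k2 : K) (i j : 'I_N),
     adtil i k1 * adtil j k2
     = \sum_(x < N) \sum_(y < N) R k2 k1 y x j i *: (adtil y k2 * adtil x k1))
  (* ~a_1 ~a+_2 = ~a+_2 R_12 ~a_1 + 1/2 delta_12 + 1/2 b_12 *)
  /\ (forall (k1 k2 : K) (i j : 'I_N),
     atil i k1 * adtil j k2
     = \sum_(x < N) \sum_(y < N) R k1 k2 i x y j *: (adtil x k2 * atil y k1)
       + (2^-1 : complex K) *: (delta (k1 - k2) * (i == j)%:R)
       + (2^-1 : complex K) *: (delta (k1 + k2) * b k1 i j))
  (* ~a_1 b_2 = R_21 b_2 R'_12 ~a_1 *)
  /\ (forall (k1 k2 : K) (i j l : 'I_N),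
     atil i k1 * b k2 j l
     = \sum_(x < N) \sum_(y < N) \sum_(y' < N) \sum_(z < N)
         R k2 k1 j i y x *: (b k2 y y' * (R k1 (- k2) x y' z l *: atil z k1)))
  (* b_1 ~a+_2 = ~a+_2 R_12 b_1 R'_21 *)
  /\ (forall (k1 k2 : K) (i j l : 'I_N),
     b k1 i j * adtil l k2
     = \sum_(z < N) \sum_(x < N) \sum_(x' < N) \sum_(y < N)
         adtil z k2 * (R k1 k2 i z x y *: (b k1 x x' * (R k2 (- k1) y x' l j)%:A)))
  (* R_12 b_1 R'_21 b_2 = b_2 R'_12 b_1 Rbar_21 *)
  /\ (forall k1 k2 : K,
     reflection_eq (fun k k' => @lift2 _ A N (R k k')) (fun k i j => b k i j) k1 k2)
  (* b(k) b(-k) = 1 *)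
  /\ (forall k : K, b k *m b (- k) = 1%:M).
Proof.
move=> b atil adtil.
split; first by move=> k1 k2 i j; apply: E1.
split; first by move=> k1 k2 i j; apply: E2.
split; first by move=> k1 k2 i j; apply: E3.
split; first by move=> k1 k2 i j l; apply: E4.
split; first by move=> k1 k2 i j l; apply: E5.
split; first by move=> k1 k2; apply: E6.
by move=> k; apply: E7.
Qed.
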